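(* Let $\mathbb{X}$ be a finite subset of the projective space $\mathbb{P}^{s-1}$ over a field $K$, let $I(\mathbb{X})\subset S=K[t_1,\ldots,t_s]$ be its vanishing ideal, and let $\prec$ be a monomial order on $S$. If $0\neq f\in S$ is homogeneous and $(I(\mathbb{X})\colon f)\neq I(\mathbb{X})$, then $$|V_{\mathbb{X}}(f)|=\deg(S/(I(\mathbb{X}),f))\leq\deg(S/(\mathrm{in}_\prec(I(\mathbb{X})),\mathrm{in}_\prec(f)))\leq\deg(S/I(\mathbb{X})),$$ and $\deg(S/(I(\mathbb{X}),f))<\deg(S/I(\mathbb{X}))$ if $f\notin I(\mathbb{X})$.
   Context: $I(\mathbb{X})$ is the ideal generated by all homogeneous polynomials vanishing at every point of $\mathbb{X}$; $V_{\mathbb{X}}(f)$ is the set of points of $\mathbb{X}$ where $f$ vanishes. $(I\colon f)=\{h\in S: hf\in I\}$. $\mathrm{in}_\prec(f)$ is the leading monomial of $f$, $\mathrm{in}_\prec(I)$ the initial ideal. For a graded ideal $J$ with Hilbert function $H_J(d)=\dim_K(S_d/J_d)$ and $k=\dim(S/J)$, $\deg(S/J)=(k-1)!\lim_{d\to\infty}H_J(d)/d^{k-1}$ if $k\geq 1$ and $\dim_K(S/J)$ if $k=0$. *)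

(* Defs.v *)
From HB Require Import structures.
From mathcomp Require Import all_boot all_order all_algebra.
From mathcomp Require Import mpoly.
From Stdlib Require Import ClassicalEpsilon.

Set Implicit Arguments.
Unset Strict Implicit.
Unset Printing Implicit Defensive.

Import Order.TTheory GRing.Theory Num.Theory.
Local Open Scope ring_scope.

Section Defs.
Variables (K : fieldType) (s : nat).
Local Notation S := {mpoly K[s]}.

Definition gen_ideal (G : S -> Prop) : S -> Prop :=
  fun f => exists (hs gs : seq S),
    size hs = size gs /\ (forall g, g \in gs -> G g) /\
    f = \sum_(i < size gs) hs`_i * gs`_i.

Definition ideal_add (J : S -> Prop) (f : S) : S -> Prop :=
  gen_ideal (fun g => J g \/ g = f).

Definition colon (J : S -> Prop) (f : S) : S -> Prop := fun h => J (h * f).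

Definition homogeneous (f : S) : Prop := exists d : nat, f \is d.-homog.

(* Points of P^{s-1} are given by (nonzero) representatives in K^s. *)
Definition point := {ffun 'I_s -> K}.

Definition proj_finite_set (X : seq point) : Prop :=
  (forall x, x \in X -> x != [ffun=> 0]) /\
  (forall i j, (i < size X)%N -> (j < size X)%N -> i <> j ->
     ~ exists c : K, forall k, (nth [ffun=> 0] X i) k = c * (nth [ffun=> 0] X j) k).

Definition vanishing_ideal (X : seq point) : S -> Prop :=
  gen_ideal (fun g => homogeneous g /\ forall x, x \in X -> g.@[x] = 0).

Definition card_zeros (X : seq point) (f : S) : nat :=
  count (fun x : point => f.@[x] == 0) X.

Record monomial_order := MonomialOrder {
  mle : rel 'X_{1..s};
  mle_refl : reflexive mle;
  mle_anti : antisymmetric mle;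
  mle_trans : transitive mle;
  mle_total : total mle;
  mle_0 : forall m, mle 0%MM m;
  mle_add : forall m1 m2 m3, mle m1 m2 -> mle (m1 + m3)%MM (m2 + m3)%MM
}.

Definition lead_mnm (o : monomial_order) (f : S) : 'X_{1..s} :=
  foldr (fun m acc => if mle o acc m then m else acc) 0%MM (msupp f).

Definition in_poly (o : monomial_order) (f : S) : S := 'X_[lead_mnm o f].

Definition in_ideal (o : monomial_order) (J : S -> Prop) : S -> Prop :=
  gen_ideal (fun g => exists f, J f /\ f != 0 /\ g = in_poly o f).

Definition indep_mod (J : S -> Prop) (ps : seq S) : Prop :=
  forall cs : seq K, size cs = size ps ->
    J (\sum_(i < size ps) cs`_i *: ps`_i) -> forall i, cs`_i = 0.

(* dim_K (V / (J cap V)) for V a subspace: the maximal size of a family in V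
   linearly independent modulo J (chosen classically). *)
Definition is_qdim (V : S -> Prop) (J : S -> Prop) (n : nat) : Prop :=
  (exists ps : seq S, size ps = n /\ (forall p, p \in ps -> V p) /\ indep_mod J ps) /\
  (forall ps : seq S, (forall p, p \in ps -> V p) -> indep_mod J ps -> (size ps <= n)%N).

Definition qdim (V : S -> Prop) (J : S -> Prop) : nat :=
  epsilon (inhabits 0%N) (is_qdim V J).

Definition hilbert_fun (J : S -> Prop) (d : nat) : nat :=
  qdim (fun p => p \is d.-homog) J.

Definition is_ideal (P : S -> Prop) : Prop :=
  P 0 /\ (forall a b, P a -> P b -> P (a + b)) /\ (forall a b, P b -> P (a * b)).

Definition is_prime_ideal (P : S -> Prop) : Prop :=
  is_ideal P /\ ~ P 1 /\ (forall a b, P (a * b) -> P a \/ P b).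

Definition strict_incl (P Q : S -> Prop) : Prop :=
  (forall a, P a -> Q a) /\ exists a, Q a /\ ~ P a.

(* a chain P_0 < P_1 < ... < P_k of primes containing J, of length k *)
Definition prime_chain (J : S -> Prop) (Ps : seq (S -> Prop)) : Prop :=
  (forall i, (i < size Ps)%N -> is_prime_ideal (nth J Ps i) /\
                               forall a, J a -> nth J Ps i a) /\
  (forall i, (i.+1 < size Ps)%N -> strict_incl (nth J Ps i) (nth J Ps i.+1)).

Definition is_krull_dim (J : S -> Prop) (k : nat) : Prop :=
  (exists Ps, prime_chain J Ps /\ size Ps = k.+1) /\
  (forall Ps, prime_chain J Ps -> (size Ps <= k.+1)%N).

Definition krull_dim (J : S -> Prop) : nat :=
  epsilon (inhabits 0%N) (is_krull_dim J).

Definition converges (a : nat -> rat) (l : rat) : Prop :=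
  forall eps : rat, 0 < eps -> exists N : nat, forall d, (N <= d)%N -> `|a d - l| < eps.

Definition limq (a : nat -> rat) : rat := epsilon (inhabits 0) (converges a).

Definition deg (J : S -> Prop) : rat :=
  match krull_dim J with
  | k.+1 => (k`!)%:R * limq (fun d => (hilbert_fun J d)%:R / (d%:R ^+ k))
  | 0%N => (qdim (fun _ => True) J)%:R
  end.

End Defs.

(* Main.v *)
Set Warnings "-notation-overridden,-ambiguous-paths,-notation-incompatible-prefix".
Require Import Defs.
From HB Require Import structures.
From mathcomp Require Import all_boot all_order all_algebra.
From mathcomp Require Import mpoly.
From mathcomp Require Import ring lra zify.
From Stdlib Require Import ClassicalEpsilon.
Import Order.TTheory GRing.Theory Num.Theory.
Local Open Scope ring_scope.

Set Implicit Arguments.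
Unset Strict Implicit.
Unset Printing Implicit Defensive.

Section Main.
Context (K : fieldType) (s : nat).
Local Notation S := {mpoly K[s]}.
Implicit Types (G J P Q : S -> Prop).

Lemma gen_idealP G f : gen_ideal G f <->
  exists l : seq (S * S), (forall p, p \in l -> G p.2) /\ f = \sum_(p <- l) p.1 * p.2.
Proof.
split.
- move=> [hs [gs [Hsz [HG ->]]]].
  exists (zip hs gs); split.
    move=> p /(map_f snd); rewrite -/(unzip2 _) unzip2_zip ?Hsz //; exact: HG.
  rewrite (big_nth (0,0)) big_mkord size_zip Hsz minnn.
  by apply: eq_bigr => i _; rewrite nth_zip.
- move=> [l [Hl ->]]; exists (unzip1 l), (unzip2 l); rewrite !size_map; split=> //.
  split; first by move=> g /mapP [p pl ->]; exact: Hl.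
  rewrite (big_nth (0,0)) big_mkord; apply: eq_bigr => i _.
  by rewrite !(nth_map (0,0)).
Qed.

Lemma gen_ideal_ideal G : is_ideal (gen_ideal G).
Proof.
split; [|split].
- by apply/gen_idealP; exists [::]; rewrite big_nil.
- move=> a b /gen_idealP [la [Ha ->]] /gen_idealP [lb [Hb ->]].
  apply/gen_idealP; exists (la ++ lb); split; last by rewrite big_cat.
  by move=> p; rewrite mem_cat => /orP [/Ha|/Hb].
- move=> a b /gen_idealP [lb [Hb ->]].
  apply/gen_idealP; exists [seq (a * p.1, p.2) | p <- lb]; split.
    by move=> p /mapP [q ql ->] /=; apply: Hb.
  by rewrite big_map mulr_sumr; apply: eq_bigr => p _; rewrite mulrA.
Qed.

Lemma gen_ideal_gen G g : G g -> gen_ideal G g.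
Proof.
move=> Gg; apply/gen_idealP; exists [:: (1, g)]; split.
  by move=> p; rewrite inE => /eqP ->.
by rewrite big_seq1 mul1r.
Qed.

Lemma gen_ideal_min G P : is_ideal P -> (forall g, G g -> P g) ->
  forall f, gen_ideal G f -> P f.
Proof.
move=> [P0 [PD PM]] HG f /gen_idealP [l [Hl ->]].
elim: l Hl => [|p l IH] Hl; first by rewrite big_nil.
rewrite big_cons; apply: PD; first by apply: PM; apply: HG; apply: Hl; rewrite inE eqxx.
by apply: IH => q ql; apply: Hl; rewrite inE ql orbT.
Qed.

Lemma idealZ P c a : is_ideal P -> P a -> P (c *: a).
Proof. by move=> [_ [_ PM]] Pa; rewrite -mul_mpolyC; apply: PM. Qed.

Lemma idealN P a : is_ideal P -> P a -> P (- a).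
Proof. by move=> [_ [_ PM]] Pa; rewrite -mulN1r; apply: PM. Qed.

Lemma idealB P a b : is_ideal P -> P a -> P b -> P (a - b).
Proof. move=> HP Pa Pb; case: (HP) => _ [PD _]; by apply: PD => //; apply: idealN. Qed.

Lemma idealMr P a b : is_ideal P -> P a -> P (a * b).
Proof. by move=> [_ [_ PM]] Pa; rewrite mulrC; apply: PM. Qed.

Lemma ideal_sum P (I : eqType) (r : seq I) (F : I -> S) :
  is_ideal P -> (forall i, i \in r -> P (F i)) -> P (\sum_(i <- r) F i).
Proof.
move=> [P0 [PD PM]] HF; elim: r HF => [|i r IH] HF; first by rewrite big_nil.
rewrite big_cons; apply: PD; first by apply: HF; rewrite inE eqxx.
by apply: IH => j jr; apply: HF; rewrite inE jr orbT.
Qed.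

Lemma ideal_sum_ord P n (F : 'I_n -> S) :
  is_ideal P -> (forall i, P (F i)) -> P (\sum_(i < n) F i).
Proof. by move=> HP HF; apply: ideal_sum. Qed.

Lemma prime_prod P (I : eqType) (r : seq I) (F : I -> S) :
  is_prime_ideal P -> P (\prod_(i <- r) F i) -> exists2 i, i \in r & P (F i).
Proof.
move=> [HP [P1 Pm]]; elim: r => [|i r IH]; first by rewrite big_nil.
rewrite big_cons => /Pm [Pi|/IH [j jr Pj]]; first by exists i; rewrite ?inE ?eqxx.
by exists j; rewrite // inE jr orbT.
Qed.

Lemma prime_exp P a n : is_prime_ideal P -> P (a ^+ n) -> P a.
Proof.
move=> HP; elim: n => [|n IH]; first by rewrite expr0 => H; case: HP => _ [].
by rewrite exprS; case: (HP) => _ [_ Pm] /Pm [//|/IH].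
Qed.


Definition phiv (v : 'I_s -> K) (p : S) : {poly K} := mmap polyC (fun k => v k *: 'X) p.

Lemma phivD v : {morph phiv v : a b / a + b}.
Proof. by move=> a b; rewrite /phiv mmapD. Qed.

Lemma phivM v : {morph phiv v : a b / a * b}.
Proof. by move=> a b; rewrite /phiv (mmap_is_multiplicative _ _).1. Qed.

Lemma phiv1 v : phiv v 1 = 1.
Proof. by rewrite /phiv (mmap_is_multiplicative _ _).2. Qed.

Lemma phiv0 v : phiv v 0 = 0.
Proof. by rewrite /phiv mmap0. Qed.

Lemma phivN v a : phiv v (- a) = - phiv v a.
Proof. by rewrite /phiv mmapN. Qed.

Lemma phivZ v c a : phiv v (c *: a) = c *: phiv v a.
Proof. by rewrite -mul_mpolyC phivM /phiv mmapC mul_polyC. Qed.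

Lemma phivX v (i : 'I_s) : phiv v 'X_i = v i *: 'X.
Proof. by rewrite /phiv mmapX mmap1U. Qed.

Lemma mmap1_scal (v : 'I_s -> K) m :
  mmap1 (fun k => v k *: ('X : {poly K})) m = ('X_[m] : S).@[v] *: 'X^(mdeg m).
Proof.
rewrite /mmap1 mevalX mdegE -prodrXr -mul_polyC rmorph_prod -big_split /=.
by apply: eq_bigr => i _; rewrite exprZn mul_polyC.
Qed.

Lemma phiv_coef v p e : (phiv v p)`_e = (pihomog mdeg e p).@[v].
Proof.
rewrite /phiv /mmap pihomogE coef_sum rmorph_sum /= [RHS]big_mkcond /=.
apply: eq_bigr => m _; rewrite mmap1_scal coefCM coefZ coefXn.
case: eqP => [->|]; first by rewrite eqxx mulr1 mevalZ.
by move/eqP; rewrite eq_sym => /negbTE ->; rewrite !mulr0.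
Qed.

Lemma phiv_eq0 v p : phiv v p = 0 <-> forall e, (pihomog mdeg e p).@[v] = 0.
Proof.
split=> [H e|H]; first by rewrite -phiv_coef H coef0.
by apply/polyP => e; rewrite phiv_coef H coef0.
Qed.

Lemma pihomog_homog d e (g : S) : g \is d.-homog ->
  pihomog mdeg e g = if e == d then g else 0.
Proof.
move=> Hg; case: eqP => [->|/eqP ne]; first exact: pihomog_dE.
by apply: pihomog_ne0 Hg; rewrite eq_sym.
Qed.

Lemma phiv_homog v d (g : S) : g \is d.-homog -> phiv v g = g.@[v] *: 'X^d.
Proof.
move=> Hg; apply/polyP => e; rewrite phiv_coef coefZ coefXn (pihomog_homog e Hg).
by case: eqP => _; rewrite ?mulr1 ?mulr0 ?meval0.
Qed.

Lemma phiv_homog0 v d (g : S) : g \is d.-homog -> (phiv v g = 0 <-> g.@[v] = 0).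
Proof.
move=> Hg; rewrite (phiv_homog v Hg); split=> [|->]; last by rewrite scale0r.
by move/eqP; rewrite scaler_eq0 -size_poly_eq0 size_polyXn /= orbF => /eqP.
Qed.

Definition Ix (v : 'I_s -> K) : S -> Prop := fun p => phiv v p = 0.
Definition Mx (v : 'I_s -> K) : S -> Prop := fun p => (phiv v p).[0] = 0.

Lemma Ix_prime v : is_prime_ideal (Ix v).
Proof.
rewrite /Ix; split; [split; [|split]|split].
- exact: phiv0.
- by move=> a b Ha Hb; rewrite phivD Ha Hb addr0.
- by move=> a b Hb; rewrite phivM Hb mulr0.
- by rewrite phiv1; apply/eqP; rewrite oner_eq0.
- by move=> a b; rewrite phivM => /eqP; rewrite mulf_eq0 => /orP [] /eqP; [left|right].
Qed.

Lemma Mx_prime v : is_prime_ideal (Mx v).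
Proof.
rewrite /Mx; split; [split; [|split]|split].
- by rewrite phiv0 horner0.
- by move=> a b Ha Hb; rewrite phivD hornerD Ha Hb addr0.
- by move=> a b Hb; rewrite phivM hornerM Hb mulr0.
- by rewrite phiv1 hornerC; apply/eqP; rewrite oner_eq0.
- by move=> a b; rewrite phivM hornerM => /eqP; rewrite mulf_eq0 => /orP [] /eqP; [left|right].
Qed.

Lemma pihomog_partition (p : S) : p = \sum_(d < msize p) pihomog mdeg d p.
Proof. exact: pihomog_partitionE. Qed.

Lemma van_char (Y : seq (point K s)) h :
  vanishing_ideal Y h <-> forall x, x \in Y -> phiv x h = 0.
Proof.
split.
- move=> Hh x xY; move: h Hh; apply: gen_ideal_min; first exact: (Ix_prime x).1.
  by move=> g [[d Hd] Hg]; apply/(phiv_homog0 x Hd); apply: Hg.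
- move=> H; rewrite (pihomog_partition h); apply: ideal_sum.
    exact: gen_ideal_ideal.
  move=> d _; apply: gen_ideal_gen; split; first by exists d; exact: pihomogP.
  by move=> x xY; move: (H x xY) => /phiv_eq0; apply.
Qed.

Lemma van_eval (Y : seq (point K s)) h x :
  vanishing_ideal Y h -> x \in Y -> h.@[x] = 0.
Proof.
move=> /van_char H xY; rewrite (pihomog_partition h) rmorph_sum /=.
by apply: big1 => d _; move: (H x xY) => /phiv_eq0; apply.
Qed.

Lemma van_ideal (Y : seq (point K s)) : is_ideal (vanishing_ideal Y).
Proof. exact: gen_ideal_ideal. Qed.

Lemma van_gen (Y : seq (point K s)) d (g : S) : g \is d.-homog ->
  (forall x, x \in Y -> g.@[x] = 0) -> vanishing_ideal Y g.
Proof. by move=> Hd Hg; apply: gen_ideal_gen; split=> //; exists d. Qed.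

Lemma GUB (V J : S -> Prop) (B : seq S) :
  is_ideal J ->
  (forall v, V v -> exists c : nat -> K, J (v - \sum_(k < size B) c k *: B`_k)) ->
  forall ps, (forall p, p \in ps -> V p) -> indep_mod J ps -> (size ps <= size B)%N.
Proof.
move=> HJ Hsp ps Hps Hind; rewrite leqNgt; apply/negP => Hlt.
pose r := size ps; pose n := size B.
pose cf (i : nat) := epsilon (inhabits (fun _ : nat => (0 : K)))
   (fun c : nat -> K => J (ps`_i - \sum_(k < n) c k *: B`_k)).
have Hcf (i : 'I_r) : J (ps`_i - \sum_(k < n) cf i k *: B`_k).
  apply: (epsilon_spec (inhabits (fun _ : nat => (0 : K)))
     (fun c : nat -> K => J (ps`_i - \sum_(k < n) c k *: B`_k))).
  by apply: Hsp; apply: Hps; apply: mem_nth.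
pose A : 'M[K]_(r, n) := \matrix_(i, k) cf i k.
have nfree : ~~ row_free A.
  rewrite /row_free; apply/negP => /eqP Hr.
  by move: (rank_leq_col A); rewrite Hr leqNgt Hlt.
have Hk : kermx A != 0 by rewrite kermx_eq0.
have [i0 Hi0] : exists i0, row i0 (kermx A) != 0.
  apply/existsP; move: Hk; apply: contraR => /existsPn H; apply/eqP/row_matrixP => i.
  by rewrite row0; apply/eqP; move: (H i); rewrite negbK.
pose c := row i0 (kermx A).
have cA : c *m A = 0 by rewrite /c -row_mul mulmx_ker row0.
pose cs := [seq c 0 i | i <- enum 'I_r].
have cs_nth (i : 'I_r) : cs`_i = c 0 i.
  by rewrite /cs (nth_map i) ?size_enum_ord // nth_ord_enum.
have : J (\sum_(i < size ps) cs`_i *: ps`_i).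
  have -> : \sum_(i < size ps) cs`_i *: ps`_i =
     \sum_(i < r) c 0 i *: (ps`_i - \sum_(k < n) cf i k *: B`_k)
     + \sum_(k < n) (c *m A) 0 k *: B`_k.
    have -> : \sum_(k < n) (c *m A) 0 k *: B`_k =
        \sum_(i < r) c 0 i *: \sum_(k < n) cf i k *: B`_k.
      rewrite (eq_bigr (fun k : 'I_n => \sum_(i < r) (c 0 i * cf i k) *: B`_k)); last first.
        move=> k _; rewrite !mxE scaler_suml; by apply: eq_bigr => i _; rewrite /A [in X in _ * X]mxE.
      rewrite exchange_big /=; apply: eq_bigr => i _; rewrite scaler_sumr.
      by apply: eq_bigr => k _; rewrite scalerA.
    rewrite -big_split /=; apply: eq_bigr => i _.
    by rewrite cs_nth -scalerDr subrK.
  rewrite cA; have -> : \sum_(k < n) (0 : 'M[K]_(1, n)) 0 k *: B`_k = 0.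
    by apply: big1 => k _; rewrite mxE scale0r.
  rewrite addr0; apply: ideal_sum_ord => // i; by apply: idealZ.
move/Hind; rewrite size_map size_enum_ord => /(_ erefl) Hc.
move: Hi0; rewrite -/c; apply/negP; rewrite negbK; apply/eqP/rowP => i.
by have := cs_nth i; rewrite Hc /c !mxE => /esym.
Qed.

Lemma qdim_eq (V J : S -> Prop) n : is_qdim V J n -> qdim V J = n.
Proof.
move=> H.
have H' : is_qdim V J (qdim V J) :=
  epsilon_spec (inhabits 0%N) (is_qdim V J) (ex_intro _ n H).
case: H => [[ps1 [sz1 [V1 I1]]] B1]; case: H' => [[ps2 [sz2 [V2 I2]]] B2].
apply/eqP; rewrite eqn_leq; apply/andP; split.
  by rewrite -sz2; apply: B1.
by rewrite -sz1; apply: B2.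
Qed.

Lemma krull_eq (J : S -> Prop) k : is_krull_dim J k -> krull_dim J = k.
Proof.
move=> H.
have H' : is_krull_dim J (krull_dim J) :=
  epsilon_spec (inhabits 0%N) (is_krull_dim J) (ex_intro _ k H).
case: H => [[Ps1 [C1 sz1]] B1]; case: H' => [[Ps2 [C2 sz2]] B2].
apply/eqP; rewrite eqn_leq; apply/andP; split.
  by rewrite -ltnS -sz2; apply: B1.
by rewrite -ltnS -sz1; apply: B2.
Qed.

Lemma converges_uniq (a : nat -> rat) l1 l2 :
  converges a l1 -> converges a l2 -> l1 = l2.
Proof.
move=> H1 H2; apply/eqP; apply: contraT => ne.
have hp : 0 < `|l1 - l2| / 2 by rewrite divr_gt0 // normr_gt0 subr_eq0.
case: (H1 _ hp) => N1 HN1; case: (H2 _ hp) => N2 HN2.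
have := HN1 (maxn N1 N2) (leq_maxl _ _); have := HN2 (maxn N1 N2) (leq_maxr _ _).
set x := a _ => h2 h1.
have : `|l1 - l2| <= `|x - l1| + `|x - l2|.
  by rewrite (distrC x l1); have := ler_normD (l1 - x) (x - l2); rewrite addrA subrK.
move: h1 h2 hp; set e := `|l1 - l2|; set u := `|x - l1|; set w := `|x - l2|.
move=> h1 h2 hp h3; lra.
Qed.

Lemma limq_eventually (a : nat -> rat) c :
  (exists N, forall d, (N <= d)%N -> a d = c) -> limq a = c.
Proof.
move=> [N HN].
have Hc : converges a c.
  by move=> e he; exists N => d /HN ->; rewrite subrr normr0.
have H := epsilon_spec (inhabits 0) (converges a) (ex_intro _ c Hc).
exact: converges_uniq H Hc.
Qed.

Lemma deg_one (J : S -> Prop) (c : nat) : krull_dim J = 1%N ->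
  (exists N, forall d, (N <= d)%N -> hilbert_fun J d = c) -> deg J = c%:R.
Proof.
move=> HK [N HN]; rewrite /deg HK fact0 mul1r; apply: limq_eventually.
by exists N => d /HN ->; rewrite expr0 divr1.
Qed.

Lemma coef_sumX_seq (r : seq 'X_{1..s}) (F : 'X_{1..s} -> K) m : uniq r ->
  (\sum_(m' <- r) F m' *: ('X_[m'] : S))@_m = if m \in r then F m else 0.
Proof.
move=> ur; rewrite raddf_sum /=.
rewrite (eq_bigr (fun m' => F m' * (m' == m)%:R)); last by move=> m' _; rewrite mcoeffZ mcoeffX.
case: ifP => mr.
  rewrite (bigD1_seq m) //= eqxx mulr1 big1 ?addr0 // => m' /negbTE ->.
  by rewrite mulr0.
rewrite big_seq big1 // => m' m'r; case: eqP => [e|_]; last by rewrite mulr0.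
by move: mr; rewrite -e m'r.
Qed.

Lemma coef_sumXo (r : seq 'X_{1..s}) (F : nat -> K) m : uniq r ->
  (\sum_(i < size r) F i *: ('X_[nth 0%MM r i] : S))@_m =
     if m \in r then F (index m r) else 0.
Proof.
move=> ur; rewrite raddf_sum /=.
rewrite (eq_bigr (fun i : 'I_(size r) => F i * (nth 0%MM r i == m)%:R)); last first.
  by move=> i _; rewrite mcoeffZ mcoeffX.
case: ifP => mr.
  have ir : (index m r < size r)%N by rewrite index_mem.
  rewrite (bigD1 (Ordinal ir)) //= nth_index // eqxx mulr1 big1 ?addr0 // => i ne.
  case: eqP => [e|]; last by rewrite mulr0.
  by move: ne; rewrite -val_eqE /= -e index_uniq ?eqxx.
rewrite big1 // => i _; case: eqP => [e|_]; last by rewrite mulr0.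
by move: mr; rewrite -e mem_nth.
Qed.

Lemma pihomog_coef e (g : S) m :
  (pihomog mdeg e g)@_m = if mdeg m == e then g@_m else 0.
Proof.
rewrite pihomogE -big_filter coef_sumX_seq ?filter_uniq ?msupp_uniq //.
rewrite mem_filter; case: (mdeg m == e) => //=.
by case: ifP => // /negbT; rewrite mcoeff_msupp negbK => /eqP.
Qed.

Section Lead.
Variable o : monomial_order s.
Local Notation le := (mle o).

Definition lmax (l : seq 'X_{1..s}) :=
  foldr (fun m acc => if le acc m then m else acc) 0%MM l.

Lemma lmax_mem l : l != [::] -> lmax l \in l.
Proof.
elim: l => [//|a l IH] _ /=; case: ifP => H; first by rewrite inE eqxx.
case: l IH H => [|b l] IH H; first by rewrite /= mle_0 in H.
by rewrite inE IH ?orbT.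
Qed.

Lemma lmax_ge l m : m \in l -> le m (lmax l).
Proof.
elim: l => [//|a l IH]; rewrite inE => /orP [/eqP ->|ml] /=.
  case: ifP => [_|]; first exact: mle_refl.
  by move=> /negbT H; case/orP: (mle_total o a (lmax l)) => //; rewrite (negbTE H).
case: ifP => [H|_]; last exact: IH.
exact: mle_trans (IH ml) H.
Qed.

Lemma lead_supp (p : S) : p != 0 -> lead_mnm o p \in msupp p.
Proof. by move=> nz; apply: lmax_mem; rewrite msupp_eq0. Qed.

Lemma lead_ge (p : S) m : m \in msupp p -> le m (lead_mnm o p).
Proof. exact: lmax_ge. Qed.

Lemma le_anti m1 m2 : le m1 m2 -> le m2 m1 -> m1 = m2.
Proof. by move=> h1 h2; apply: (@mle_anti _ o); rewrite h1 h2. Qed.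

Lemma lead_eq (p : S) m : m \in msupp p ->
  (forall m', m' \in msupp p -> le m' m) -> lead_mnm o p = m.
Proof.
move=> mp H; apply: le_anti; last exact: lead_ge.
apply: H; apply: lead_supp; apply/eqP => p0; by rewrite p0 msupp0 in mp.
Qed.

Lemma le_addl a m1 m2 : le m1 m2 -> le (a + m1)%MM (a + m2)%MM.
Proof. by move=> h; rewrite ![(a + _)%MM]addmC; apply: mle_add. Qed.

Lemma msupp_XM a (q : S) m : (m \in msupp ('X_[a] * q)) = (m \in [seq (a + m')%MM | m' <- msupp q]).
Proof. by rewrite mulrC (perm_mem (msuppMX q a)). Qed.

Lemma lead_XM a (q : S) : q != 0 -> lead_mnm o ('X_[a] * q) = (a + lead_mnm o q)%MM.
Proof.
move=> nz; apply: lead_eq; first by rewrite msupp_XM map_f // lead_supp.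
move=> m'; rewrite msupp_XM => /mapP [m'' H ->]; apply: le_addl; exact: lead_ge.
Qed.

Lemma lead_pihomog (g : S) (e := mdeg (lead_mnm o g)) : g != 0 ->
  pihomog mdeg e g != 0 /\ lead_mnm o (pihomog mdeg e g) = lead_mnm o g.
Proof.
move=> nz.
have Hm : lead_mnm o g \in msupp (pihomog mdeg e g).
  by rewrite mcoeff_msupp pihomog_coef eqxx -mcoeff_msupp lead_supp.
split; first by apply/eqP => H; rewrite H msupp0 in Hm.
apply: lead_eq => // m'; rewrite mcoeff_msupp pihomog_coef.
case: ifP => _; last by rewrite eqxx.
by rewrite -mcoeff_msupp; apply: lead_ge.
Qed.

End Lead.

Lemma homogX1 (k : 'I_s) : ('X_k : S) \is 1.-homog.
Proof. rewrite dhomogX; apply/eqP; exact: mdeg1. Qed.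

Lemma homogXU d (k : 'I_s) : ('X_k : S) ^+ d \is d.-homog.
Proof.
have h := homogX1 k.
by have := dhomogMn d h; rewrite mul1n.
Qed.

Lemma prod_homog (T : Type) (r : seq T) (F : T -> S) :
  (forall i, F i \is 1.-homog) -> \prod_(i <- r) F i \is (size r).-homog.
Proof.
move=> H; elim: r => [|a r IH]; first by rewrite big_nil; apply: dhomog1.
by rewrite big_cons; apply: (dhomogM (H a) IH).
Qed.

Section Pts.
Variable (X : seq (point K s)).
Hypothesis HX : proj_finite_set X.

Lemma X_uniq : uniq X.
Proof.
apply/(uniqP [ffun=> 0]) => i j ir jr e; apply/eqP; apply: contraT => ne.
case: HX => _ H; exfalso; apply: (H i j ir jr); first exact/eqP.
by exists 1 => k; rewrite e mul1r.
Qed.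

Lemma X_nz x : x \in X -> exists k, x k != 0.
Proof.
case: HX => H _ /H nz; apply/existsP; move: nz; apply: contraR => /existsPn H'.
by apply/eqP/ffunP => k; rewrite ffunE; apply/eqP; move: (H' k); rewrite negbK.
Qed.

Lemma X_nprop x y : x \in X -> y \in X -> x != y ->
  ~ exists c, forall k, x k = c * y k.
Proof.
move=> xX yX ne; case: HX => _ H.
have := H (index x X) (index y X); rewrite !index_mem !nth_index //.
apply=> //; move=> e; move: ne; by rewrite -(nth_index [ffun=> 0] xX) e nth_index // eqxx.
Qed.

Lemma sep_form x y : x \in X -> y \in X -> x != y ->
  exists l : S, [/\ l \is 1.-homog, l.@[x] = 0 & l.@[y] != 0].
Proof.
move=> xX yX ne; have [k yk] := X_nz yX.
have [m Hm] : exists m, x k * y m - x m * y k != 0.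
  apply/existsP; apply: contraT => /existsPn H; exfalso.
  apply: (X_nprop xX yX ne); exists (x k / y k) => m.
  move: (H m); rewrite negbK subr_eq0 => /eqP e.
  by rewrite mulrAC e mulfK.
exists (x k *: 'X_m - x m *: 'X_k); split.
- by apply: rpredB; apply: rpredZ; apply: homogX1.
- by rewrite mevalB !mevalZ !mevalXU mulrC subrr.
- by rewrite mevalB !mevalZ !mevalXU.
Qed.

Lemma delta_ex d y : (size X <= d)%N -> y \in X ->
  exists dl : S, [/\ dl \is d.-homog, dl.@[y] = 1 &
     forall x, x \in X -> x != y -> dl.@[x] = 0].
Proof.
move=> Hd yX; have [k yk] := X_nz yX.
pose L := [seq x <- X | x != y].
pose P x (l : S) := [/\ l \is 1.-homog, l.@[x] = 0 & l.@[y] != 0].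
pose lf x := epsilon (inhabits 0) (P x).
have Hlf x : x \in L -> P x (lf x).
  rewrite mem_filter => /andP [ne xX].
  by apply: (epsilon_spec (inhabits 0) (P x)); apply: sep_form.
have HL : (size L <= d)%N by apply: leq_trans Hd; rewrite size_filter count_size.
pose q := (\prod_(x <- L) lf x) * 'X_k ^+ (d - size L).
have qh : q \is d.-homog.
  rewrite -(subnKC HL); apply: dhomogM; last exact: homogXU.
  have -> : \prod_(i <- L) lf i = \prod_(i <- L) (if i \in L then lf i else 'X_k).
    by rewrite big_seq_cond [RHS]big_seq_cond; apply: eq_bigr => i /andP [-> _].
  apply: prod_homog => i; case: ifP => [/Hlf [] //|_]; exact: homogX1.
have qy : q.@[y] != 0.
  rewrite /q rmorphM rmorph_prod rmorphXn /= mevalXU mulf_neq0 ?expf_neq0 //.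
  rewrite prodf_seq_neq0; apply/allP => x xL /=; by case: (Hlf x xL).
exists ((q.@[y])^-1 *: q); split.
- exact: rpredZ.
- by rewrite mevalZ mulVf.
- move=> x xX ne; rewrite mevalZ.
  have xL : x \in L by rewrite mem_filter ne.
  suff -> : q.@[x] = 0 by rewrite mulr0.
  rewrite /q rmorphM rmorph_prod /= (big_rem x xL) /=; case: (Hlf x xL) => _ -> _.
  by rewrite !mul0r.
Qed.

Definition delta d (y : point K s) : S := epsilon (inhabits 0) (fun dl : S =>
  [/\ dl \is d.-homog, dl.@[y] = 1 &
     forall x, x \in X -> x != y -> dl.@[x] = 0]).

Lemma deltaP d y : (size X <= d)%N -> y \in X ->
  [/\ delta d y \is d.-homog, (delta d y).@[y] = 1 &
     forall x, x \in X -> x != y -> (delta d y).@[x] = 0].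
Proof.
move=> Hd yX; apply: (epsilon_spec (inhabits 0) (fun dl : S =>
  [/\ dl \is d.-homog, dl.@[y] = 1 &
     forall x, x \in X -> x != y -> dl.@[x] = 0])); exact: delta_ex.
Qed.

Lemma delta_eval d y x : (size X <= d)%N -> y \in X -> x \in X ->
  (delta d y).@[x] = (x == y)%:R.
Proof.
move=> Hd yX xX; case: (deltaP Hd yX) => _ H1 H2.
by case: eqP => [->|/eqP ne]; [|rewrite H2].
Qed.

Lemma delta_homog d y : (size X <= d)%N -> y \in X -> delta d y \is d.-homog.
Proof. by move=> Hd yX; case: (deltaP Hd yX). Qed.

Lemma interp_eval d (Y : seq (point K s)) (F : nat -> K) x :
  (size X <= d)%N -> {subset Y <= X} -> uniq Y -> x \in X ->
  (\sum_(i < size Y) F i *: delta d (nth [ffun=> 0] Y i)).@[x] =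
  if x \in Y then F (index x Y) else 0.
Proof.
move=> Hd YX uY xX; rewrite rmorph_sum /=.
rewrite (eq_bigr (fun i : 'I_(size Y) => F i * (x == nth [ffun=> 0] Y i)%:R)); last first.
  by move=> i _; rewrite mevalZ delta_eval // YX // mem_nth.
case: ifP => xY.
  have ir : (index x Y < size Y)%N by rewrite index_mem.
  rewrite (bigD1 (Ordinal ir)) //= nth_index // eqxx mulr1 big1 ?addr0 // => i ne.
  case: eqP => [e|]; last by rewrite mulr0.
  by move: ne; rewrite -val_eqE /= e index_uniq ?eqxx.
rewrite big1 // => i _; case: eqP => [e|_]; last by rewrite mulr0.
by move: xY; rewrite e mem_nth.
Qed.

End Pts.

Section Hilb.
Variable (X : seq (point K s)).
Hypothesis HX : proj_finite_set X.

Local Notation I := (vanishing_ideal X).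
Local Notation x0 := ([ffun=> 0] : point K s).

Lemma sum_map_delta d (Y : seq (point K s)) (F : nat -> K) :
  \sum_(i < size Y) F i *: (map (delta X d) Y)`_i =
  \sum_(i < size Y) F i *: delta X d (nth x0 Y i).
Proof. by apply: eq_bigr => i _; rewrite (nth_map x0). Qed.

Lemma hilb_interp_q (J : S -> Prop) (Y : seq (point K s)) d :
  is_ideal J -> {subset Y <= X} -> uniq Y -> (size X <= d)%N ->
  (forall p, p \is d.-homog ->
      J (p - \sum_(k < size Y) p.@[nth x0 Y k] *: delta X d (nth x0 Y k))) ->
  (forall p, J p -> forall y : point K s, y \in Y -> p.@[y] = 0) ->
  is_qdim (fun p => p \is d.-homog) J (size Y).
Proof.
move=> HJ YX uY Hd Hsp Hvan; split.
- exists (map (delta X d) Y); rewrite size_map; split=> //; split.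
    by move=> p /mapP [y yY ->]; apply: delta_homog => //; apply: YX.
  move=> cs szcs; rewrite size_map (sum_map_delta d Y (fun i => cs`_i)) => /Hvan H i.
  case: (ltnP i (size Y)) => ir; last by rewrite nth_default // szcs size_map.
  have := H _ (mem_nth x0 ir); rewrite (interp_eval HX (fun i => cs`_i)) // ?mem_nth //; last by apply: YX; apply: mem_nth.
  by rewrite index_uniq.
- move=> ps Hps Hind; rewrite -(size_map (delta X d) Y).
  apply: (GUB HJ _ Hps Hind) => v Hv; exists (fun k => v.@[nth x0 Y k]).
  by rewrite size_map (sum_map_delta d Y (fun k => v.@[nth x0 Y k])); apply: Hsp.
Qed.

Lemma hilb_interp (J : S -> Prop) (Y : seq (point K s)) d :
  is_ideal J -> {subset Y <= X} -> uniq Y -> (size X <= d)%N ->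
  (forall p, p \is d.-homog ->
      J (p - \sum_(k < size Y) p.@[nth x0 Y k] *: delta X d (nth x0 Y k))) ->
  (forall p, J p -> forall y : point K s, y \in Y -> p.@[y] = 0) ->
  hilbert_fun J d = size Y.
Proof. by move=> *; apply: qdim_eq; apply: hilb_interp_q. Qed.

Lemma span_I d (p : S) : (size X <= d)%N -> p \is d.-homog ->
  I (p - \sum_(k < size X) p.@[nth x0 X k] *: delta X d (nth x0 X k)).
Proof.
move=> Hd Hp; apply: (van_gen (d := d)).
  apply: rpredB => //; apply: rpred_sum => i _; apply: rpredZ.
  by apply: delta_homog => //; apply: mem_nth.
move=> x xX; rewrite mevalB (interp_eval HX (fun k => p.@[nth x0 X k])) // ?X_uniq // xX nth_index //.
by rewrite subrr.
Qed.

Lemma H_I d : (size X <= d)%N -> hilbert_fun I d = size X.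
Proof.
move=> Hd; apply: hilb_interp => //; first exact: van_ideal.
- exact: X_uniq.
- by move=> p Hp; apply: span_I.
- by move=> p Hp y yX; apply: van_eval Hp yX.
Qed.

Variable (f : S) (df : nat).
Hypothesis Hf : f \is df.-homog.

Local Notation J := (ideal_add I f).
Local Notation V := (filter (fun x : point K s => f.@[x] == 0) X).

Lemma J_ideal : is_ideal J.
Proof. exact: gen_ideal_ideal. Qed.

Lemma I_sub_J g : I g -> J g.
Proof. by move=> Hg; apply: gen_ideal_gen; left. Qed.

Lemma f_in_J : J f.
Proof. by apply: gen_ideal_gen; right. Qed.

Lemma J_vanish p : J p -> forall y : point K s, y \in V -> p.@[y] = 0.
Proof.
move=> Hp y; rewrite mem_filter => /andP [/eqP fy yX]; move: p Hp.
apply: gen_ideal_min.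
  split; [by rewrite meval0|split].
    by move=> a b Ha Hb; rewrite mevalD Ha Hb addr0.
  by move=> a b Hb; rewrite mevalM Hb mulr0.
by move=> g [Hg|->] //; apply: van_eval Hg yX.
Qed.

Lemma V_sub : {subset V <= X}.
Proof. by move=> x; rewrite mem_filter => /andP []. Qed.

Lemma V_uniq : uniq V.
Proof. exact/filter_uniq/X_uniq. Qed.

Lemma span_J d (p : S) : (size X + df <= d)%N -> p \is d.-homog ->
  J (p - \sum_(k < size V) p.@[nth x0 V k] *: delta X d (nth x0 V k)).
Proof.
move=> Hd Hp.
have Vs := V_sub; have Vu := V_uniq.
have HdX : (size X <= d)%N by lia.
have HdX' : (size X <= d - df)%N by lia.
set q := p - _.
have qh : q \is d.-homog.
  apply: rpredB => //; apply: rpred_sum => i _; apply: rpredZ.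
  by apply: delta_homog => //; apply: V_sub; apply: mem_nth.
have qV x : x \in V -> q.@[x] = 0.
  move=> xV; rewrite mevalB (interp_eval HX (fun k => p.@[nth x0 V k])) //; last exact: V_sub.
  by rewrite xV nth_index // subrr.
pose h := \sum_(k < size X) (let x := nth x0 X k in
   if f.@[x] == 0 then 0 else q.@[x] / f.@[x]) *: delta X (d - df) (nth x0 X k).
have hh : h \is (d - df).-homog.
  apply: rpred_sum => i _; apply: rpredZ.
  by apply: delta_homog => //; apply: mem_nth.
have -> : q = (q - h * f) + h * f by rewrite subrK.
case: J_ideal => _ [JD JM]; apply: JD; last by apply: JM; exact: f_in_J.
apply: I_sub_J; apply: (van_gen (d := d)).
  apply: rpredB => //; have -> : d = (d - df + df)%N by lia.
  exact: dhomogM.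
move=> x xX; rewrite mevalB mevalM /h (interp_eval HX (fun k => let x := nth x0 X k in
   if f.@[x] == 0 then 0 else q.@[x] / f.@[x])) // ?X_uniq // xX nth_index //=.
case: eqP => [f0|/eqP fn0]; last by rewrite mulfVK // subrr.
by rewrite qV ?mem_filter ?xX ?f0 ?eqxx // mul0r subrr.
Qed.

Lemma H_Jq d : (size X + df <= d)%N -> is_qdim (fun p => p \is d.-homog) J (size V).
Proof.
move=> Hd.
have HdX : (size X <= d)%N by lia.
apply: hilb_interp_q => //.
- exact: J_ideal.
- exact: V_sub.
- exact: V_uniq.
- by move=> p Hp; apply: span_J.
- exact: J_vanish.
Qed.

Lemma H_J d : (size X + df <= d)%N -> hilbert_fun J d = size V.
Proof.
move=> Hd.
have HdX : (size X <= d)%N by lia.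
apply: hilb_interp => //.
- exact: J_ideal.
- exact: V_sub.
- exact: V_uniq.
- by move=> p Hp; apply: span_J.
- exact: J_vanish.
Qed.

End Hilb.

Definition mons d : seq 'X_{1..s} :=
  [seq val m | m <- enum [pred m : 'X_{1..s < d.+1} | mdeg (val m) == d]].

Lemma mem_mons d m : (m \in mons d) = (mdeg m == d).
Proof.
apply/mapP/idP => [[m' ] |md]; first by rewrite mem_enum inE => H1 H2; rewrite H2.
have H : (mdeg m < d.+1)%N by rewrite (eqP md).
by exists (BMultinom H); rewrite // mem_enum inE.
Qed.

Lemma mons_uniq d : uniq (mons d).
Proof. by rewrite map_inj_uniq ?enum_uniq //; apply: val_inj. Qed.

Lemma mono_in_ideal (P : S -> Prop) (p : S) : is_ideal P ->
  (forall m, m \in msupp p -> P 'X_[m]) -> P p.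
Proof.
move=> HP H; rewrite (mpolyE p); apply: ideal_sum => // m mp.
by apply: idealZ => //; apply: H.
Qed.

Lemma count_lt (T : eqType) (P Q : pred T) (r : seq T) x :
  (forall y, P y -> Q y) -> x \in r -> Q x -> ~~ P x -> (count P r < count Q r)%N.
Proof.
move=> PQ; elim: r => [//|a r IH]; rewrite inE => /orP [/eqP <-|xr] Qx nPx /=.
  rewrite Qx (negbTE nPx) add0n add1n ltnS.
  by apply: sub_count => y; apply: PQ.
rewrite -addnS; apply: leq_add; last exact: IH.
by case: (P a) (PQ a) => // ->.
Qed.

Section MonI.
Variable (X : seq (point K s)).
Hypothesis HX : proj_finite_set X.
Variable (o : monomial_order s).
Variable (f : S) (df : nat).
Hypothesis Hf : f \is df.-homog.
Hypothesis fnz : f != 0.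

Local Notation I := (vanishing_ideal X).
Local Notation J := (ideal_add I f).
Local Notation M := (ideal_add (in_ideal o I) (in_poly o f)).
Local Notation le := (mle o).
Local Notation x0 := ([ffun=> 0] : point K s).
Local Notation V := (filter (fun x : point K s => f.@[x] == 0) X).

Definition Lset (b : 'X_{1..s}) : Prop :=
  (exists g, I g /\ g != 0 /\ b = lead_mnm o g) \/ b = lead_mnm o f.

Definition DivP (p : S) : Prop :=
  forall m, m \in msupp p -> exists b, Lset b /\ (b <= m)%MM.

Lemma M_ideal : is_ideal M.
Proof. exact: gen_ideal_ideal. Qed.

Lemma DivP_ideal : is_ideal DivP.
Proof.
split; [|split].
- by move=> m; rewrite msupp0.
- move=> a b Ha Hb m /msuppD_le; rewrite mem_cat => /orP [/Ha|/Hb] //.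
- move=> a b Hb m /msuppM_le /allpairsP [[m1 m2] /= [m1a m2b ->]].
  have [c [Lc cm]] := Hb _ m2b; exists c; split=> //.
  by apply: lepm_trans cm _; apply: lem_addl.
Qed.

Lemma DivP_X b : Lset b -> DivP 'X_[b].
Proof. by move=> Lb m; rewrite msuppX inE => /eqP ->; exists b; split=> //; apply: lepm_refl. Qed.

Lemma M_DivP p : M p -> DivP p.
Proof.
apply: gen_ideal_min; first exact: DivP_ideal.
move=> g [Hg|->]; last by apply: DivP_X; right.
move: g Hg; apply: gen_ideal_min; first exact: DivP_ideal.
by move=> g [h [Ih [nz ->]]]; apply: DivP_X; left; exists h.
Qed.

Lemma in_ideal_M g : in_ideal o I g -> M g.
Proof. by move=> H; apply: gen_ideal_gen; left. Qed.

Lemma lead_in_M g : I g -> g != 0 -> M 'X_[lead_mnm o g].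
Proof. by move=> Ig nz; apply: in_ideal_M; apply: gen_ideal_gen; exists g. Qed.

Lemma M_mul m m' : M 'X_[m] -> (m <= m')%MM -> M 'X_[m'].
Proof.
move=> Hm le_mm'; rewrite -(submK le_mm') mpolyXD.
by case: M_ideal => _ [_ MM]; apply: MM.
Qed.

Lemma M_monoP m : M 'X_[m] <-> exists b, Lset b /\ (b <= m)%MM.
Proof.
split; first by move/M_DivP; apply; rewrite msuppX inE.
move=> [b [[[g [Ig [nz ->]]]|->] bm]]; apply: M_mul bm.
  exact: lead_in_M.
by apply: gen_ideal_gen; right.
Qed.

Definition inMb m : bool :=
  if excluded_middle_informative (M 'X_[m]) then true else false.

Lemma inMbP m : reflect (M 'X_[m]) (inMb m).
Proof. by rewrite /inMb; case: excluded_middle_informative => H; constructor. Qed.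

Definition std d := [seq m <- mons d | ~~ inMb m].

Lemma mem_std d m : (m \in std d) = (mdeg m == d) && ~~ inMb m.
Proof. by rewrite mem_filter mem_mons andbC. Qed.

Lemma std_uniq d : uniq (std d).
Proof. exact/filter_uniq/mons_uniq. Qed.

Lemma nth_std_map d (F : nat -> K) :
  \sum_(i < size (std d)) F i *: [seq 'X_[m] | m <- std d]`_i =
  \sum_(i < size (std d)) F i *: ('X_[nth 0%MM (std d) i] : S).
Proof. by apply: eq_bigr => i _; rewrite (nth_map 0%MM). Qed.

Lemma std_homog d (p : S) : p \in [seq ('X_[m] : S) | m <- std d] -> p \is d.-homog.
Proof.
by move=> /mapP [m]; rewrite mem_std => /andP [/eqP <- _] ->; rewrite dhomogX.
Qed.

Lemma H_M d : hilbert_fun M d = size (std d).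
Proof.
apply: qdim_eq; split.
- exists [seq 'X_[m] | m <- std d]; rewrite size_map; split=> //; split.
    exact: std_homog.
  move=> cs szcs; rewrite size_map (nth_std_map d (fun i => cs`_i)) => /M_DivP H i.
  case: (ltnP i (size (std d))) => ir; last by rewrite nth_default // szcs size_map.
  apply/eqP; apply: contraT => nz.
  have mi : nth 0%MM (std d) i \in std d by apply: mem_nth.
  have : nth 0%MM (std d) i \in msupp (\sum_(i < size (std d)) cs`_i *: ('X_[nth 0%MM (std d) i] : S)).
    by rewrite mcoeff_msupp (coef_sumXo (fun i => cs`_i)) ?std_uniq // mi index_uniq ?std_uniq.
  move/H => /M_monoP /inMbP; move: mi; rewrite mem_std => /andP [_ /negbTE ->] //.
- move=> ps Hps Hind; rewrite -(size_map (fun m => 'X_[m] : S) (std d)).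
  apply: (GUB M_ideal _ Hps Hind) => v Hv.
  exists (fun k => v@_(nth 0%MM (std d) k)).
  rewrite size_map (nth_std_map d (fun k => v@_(nth 0%MM (std d) k))).
  apply: mono_in_ideal; first exact: M_ideal.
  move=> m; rewrite mcoeff_msupp mcoeffB (coef_sumXo (fun k => v@_(nth 0%MM (std d) k))) ?std_uniq //.
  case: ifP => [ms|ns]; first by rewrite nth_index // subrr eqxx.
  rewrite subr0 -mcoeff_msupp => mv; apply/inMbP; move: ns.
  by rewrite mem_std (dhomogP _ _ _ Hv _ mv) eqxx /= => /negbFE.
Qed.

Lemma std_indep_I d : indep_mod I [seq ('X_[m] : S) | m <- std d].
Proof.
move=> cs szcs; rewrite size_map (nth_std_map d (fun i => cs`_i)).
set q := \sum_(i < _) _ => Iq i.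
case: (ltnP i (size (std d))) => ir; last by rewrite nth_default // szcs size_map.
apply/eqP; apply: contraT => nz.
have mi : nth 0%MM (std d) i \in std d by apply: mem_nth.
have qnz : q != 0.
  apply/eqP => q0; have := congr1 (mcoeff (nth 0%MM (std d) i)) q0.
  rewrite mcoeff0 /q (coef_sumXo (fun i => cs`_i)) ?std_uniq // mi index_uniq ?std_uniq // => e.
  by rewrite e eqxx in nz.
have := lead_supp o qnz; rewrite mcoeff_msupp /q (coef_sumXo (fun i => cs`_i)) ?std_uniq //.
case: ifP => [ls _|_]; last by rewrite eqxx.
move: ls; rewrite mem_std => /andP [_ /inMbP nM]; exfalso; apply: nM.
exact: lead_in_M.
Qed.

Lemma std_le_X d : (size X <= d)%N -> (size (std d) <= size X)%N.
Proof.
move=> Hd; rewrite -(size_map (fun m => 'X_[m] : S)) -(size_map (delta X d) X).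
apply: (GUB (van_ideal X) (V := fun p => p \is d.-homog)).
- move=> v Hv; exists (fun k => v.@[nth x0 X k]).
  rewrite size_map (sum_map_delta X d X (fun k => v.@[nth x0 X k])).
  exact: (span_I HX).
- exact: std_homog.
- exact: std_indep_I.
Qed.

Lemma mpolyX_nz (m : 'X_{1..s}) : ('X_[m] : S) != 0.
Proof. by apply/eqP => H; have := congr1 (mcoeff m) H; rewrite mcoeffX eqxx mcoeff0 => /eqP; rewrite oner_eq0. Qed.

Lemma Lset_homog b : Lset b ->
  exists g0 : S, [/\ J g0, g0 \is (mdeg b).-homog, g0 != 0 & lead_mnm o g0 = b].
Proof.
case=> [[g [Ig [nz ->]]]|->].
- have [nz' le'] := lead_pihomog o nz.
  exists (pihomog mdeg (mdeg (lead_mnm o g)) g); split=> //; last exact: pihomogP.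
  apply: I_sub_J; apply: (van_gen (d := mdeg (lead_mnm o g))); first exact: pihomogP.
  by move=> x xX; have := (van_char X g).1 Ig x xX; move/phiv_eq0; apply.
- exists f; split=> //; first exact: f_in_J.
  by rewrite (dhomogP _ _ _ Hf _ (lead_supp o fnz)).
Qed.

Lemma witness m : M 'X_[m] ->
  exists j : S, [/\ J j, j \is (mdeg m).-homog, j@_m != 0 &
                    forall m', m' \in msupp j -> le m' m].
Proof.
move=> /M_monoP [b [Lb bm]]; have [g0 [Jg hg nz lg]] := Lset_homog Lb.
have jnz : 'X_[m - b] * g0 != 0 by rewrite mulf_neq0 // mpolyX_nz.
have lj : lead_mnm o ('X_[m - b] * g0) = m by rewrite lead_XM // lg submK.
exists ('X_[m - b] * g0); split.
- by case: (J_ideal X f) => _ [_ JM]; apply: JM.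
- rewrite -{2}(submK bm) mdegD; apply: dhomogM => //; by rewrite dhomogX.
- by rewrite -mcoeff_msupp -{1}lj; apply: lead_supp.
- by move=> m' /(lead_ge o); rewrite lj.
Qed.

Definition Qsp d (p : S) := exists c : nat -> K,
  J (p - \sum_(k < size (std d)) c k *: ('X_[nth 0%MM (std d) k] : S)).

Lemma Qsp_J d p : J p -> Qsp d p.
Proof.
move=> Jp; exists (fun=> 0); rewrite big1 ?subr0 // => k _; exact: scale0r.
Qed.

Lemma Qsp_add d p q : Qsp d p -> Qsp d q -> Qsp d (p + q).
Proof.
move=> [c1 H1] [c2 H2]; exists (fun k => c1 k + c2 k).
have -> : p + q - \sum_(k < size (std d)) (c1 k + c2 k) *: ('X_[nth 0%MM (std d) k] : S) =
  (p - \sum_(k < size (std d)) c1 k *: ('X_[nth 0%MM (std d) k] : S)) +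
  (q - \sum_(k < size (std d)) c2 k *: ('X_[nth 0%MM (std d) k] : S)).
  rewrite (eq_bigr (fun k : 'I_(size (std d)) => c1 k *: ('X_[nth 0%MM (std d) k] : S) +
      c2 k *: 'X_[nth 0%MM (std d) k])); last by move=> k _; rewrite scalerDl.
  rewrite big_split /=; set A := \sum_(k < _) _; set B := \sum_(k < _) _.
  by rewrite opprD !addrA; congr (_ + _); rewrite -!addrA; congr (_ + _); rewrite addrC.
by case: (J_ideal X f) => _ [JD _]; apply: JD.
Qed.

Lemma Qsp_scale d c p : Qsp d p -> Qsp d (c *: p).
Proof.
move=> [c1 H1]; exists (fun k => c * c1 k).
have -> : c *: p - \sum_(k < size (std d)) (c * c1 k) *: ('X_[nth 0%MM (std d) k] : S) =
   c *: (p - \sum_(k < size (std d)) c1 k *: ('X_[nth 0%MM (std d) k] : S)).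
  rewrite scalerBr scaler_sumr; congr (_ - _); apply: eq_bigr => k _; by rewrite scalerA.
by apply: idealZ => //; apply: J_ideal.
Qed.

Lemma Qsp_std d m : m \in std d -> Qsp d 'X_[m].
Proof.
move=> ms; exists (fun k => (k == index m (std d))%:R).
have ir : (index m (std d) < size (std d))%N by rewrite index_mem.
rewrite (bigD1 (Ordinal ir)) //= eqxx scale1r nth_index // big1 ?addr0 ?subrr.
  by case: (J_ideal X f).
by move=> k; rewrite -val_eqE /= => /negbTE ->; rewrite scale0r.
Qed.

Definition rk d m := count (fun m' => le m' m) (mons d).

Lemma rk_lt d m m' : le m' m -> m' != m -> mdeg m = d -> (rk d m' < rk d m)%N.
Proof.
move=> lm ne md; apply: (count_lt (x := m)).
- by move=> y ym'; apply: mle_trans ym' lm.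
- by rewrite mem_mons md.
- exact: mle_refl.
- by apply/negP => mm'; move: ne; rewrite (le_anti lm mm') eqxx.
Qed.

Lemma reduce d p : p \is d.-homog -> Qsp d p.
Proof.
suff H : forall n (p : S), p \is d.-homog ->
    (forall m, m \in msupp p -> (rk d m < n)%N) -> Qsp d p.
  move=> Hp; apply: (H (size (mons d)).+1) => // m _; rewrite ltnS; exact: count_size.
have J0 : J 0 by case: (J_ideal X f).
elim=> [|n IH] {}p Hp Hsupp.
  case E: (msupp p) => [|m l]; first by move/eqP: E; rewrite msupp_eq0 => /eqP ->; apply: Qsp_J.
  by have := Hsupp m; rewrite E inE eqxx => /(_ isT).
case: (eqVneq p 0) => [->|pnz]; first exact: Qsp_J.
pose m := lead_mnm o p.
have mp : m \in msupp p := lead_supp o pnz.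
have md : mdeg m = d := dhomogP _ _ _ Hp _ mp.
have rkm : (rk d m <= n)%N by have := Hsupp m mp.
case: (boolP (inMb m)) => [/inMbP Mm | nMm].
- have [j [Jj hj jm lj]] := witness Mm.
  pose c := p@_m / j@_m.
  have -> : p = (p - c *: j) + c *: j by rewrite subrK.
  apply: Qsp_add; last by apply: Qsp_J; apply: idealZ => //; apply: J_ideal.
  apply: IH.
    by apply: rpredB => //; apply: rpredZ; rewrite -md.
  move=> m' m'p.
  have m'ne : m' != m.
    apply/eqP => e; move: m'p; rewrite e mcoeff_msupp mcoeffB mcoeffZ /c mulfVK //.
    by rewrite subrr eqxx.
  apply: leq_trans rkm; apply: rk_lt (m'ne) md.
  move/msuppB_le: m'p; rewrite mem_cat => /orP [/(lead_ge o) //|/msuppZ_le]; exact: lj.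
- have -> : p = (p - p@_m *: 'X_[m]) + p@_m *: 'X_[m] by rewrite subrK.
  apply: Qsp_add; last by apply: Qsp_scale; apply: Qsp_std; rewrite mem_std md eqxx.
  apply: IH.
    by apply: rpredB => //; apply: rpredZ; rewrite dhomogX; apply/eqP; exact: md.
  move=> m' m'p.
  have m'ne : m' != m.
    apply/eqP => e; move: m'p; rewrite e mcoeff_msupp mcoeffB mcoeffZ mcoeffX eqxx mulr1.
    by rewrite subrr eqxx.
  apply: leq_trans rkm; apply: rk_lt (m'ne) md.
  move/msuppB_le: m'p; rewrite mem_cat => /orP [/(lead_ge o) //|/msuppZ_le].
  by rewrite msuppX inE => /eqP e; rewrite e eqxx in m'ne.
Qed.

Lemma V_le_std d : (size X + df <= d)%N -> (size V <= size (std d))%N.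
Proof.
move=> Hd; have [[ps [szps [Vps Ips]]] _] := H_Jq HX Hf Hd.
rewrite -szps -(size_map (fun m => 'X_[m] : S) (std d)).
apply: (GUB (J_ideal X f) _ Vps Ips) => v Hv; have [c Hc] := reduce Hv.
by exists c; rewrite size_map (nth_std_map d c).
Qed.

Lemma sum_const_ord n c : (\sum_(i < n) c = n * c)%N.
Proof. by rewrite big_const_ord iter_addn_0 mulnC. Qed.

Lemma mdeg_Un (j : 'I_s) a : mdeg (U_(j) *+ a)%MM = a.
Proof. by rewrite mdegMn mdeg1 mul1n. Qed.

Lemma Un_coord (j : 'I_s) a i : ((U_(j) *+ a)%MM i) = if j == i then a else 0%N.
Proof. by rewrite mulmnE mnm1E; case: (j == i); rewrite ?mul1n ?mul0n. Qed.

Lemma X_pow_pair (j k : 'I_s) a b :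
  ('X_[U_(j) *+ a + U_(k) *+ b] : S) = 'X_j ^+ a * 'X_k ^+ b.
Proof. by rewrite mpolyXD !mpolyXn. Qed.

Local Notation N := (size X).

Lemma pair_in_M (j k : 'I_s) : j != k -> M 'X_[U_(j) *+ N + U_(k) *+ N].
Proof.
move=> jk; apply/inMbP; apply: contraT => /inMbP nM; exfalso.
pose ma a := (U_(j) *+ a + U_(k) *+ (N - a))%MM.
have sub : {subset [seq ma a | a <- iota 0 N.+1] <= std N}.
  move=> m /mapP [a ai ->]; rewrite mem_iota add0n in ai.
  rewrite mem_std mdegD !mdeg_Un subnKC ?eqxx /=; last by rewrite -ltnS.
  apply/inMbP => Mma; apply: nM; apply: M_mul Mma _.
  apply/mnm_lepP => i; rewrite !mnmDE !Un_coord.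
  case: (j == i); case: (k == i); rewrite ?addn0 ?add0n //; last exact: leq_subr.
  rewrite -ltnS in ai; rewrite leq_add //; exact: leq_subr.
have un : uniq [seq ma a | a <- iota 0 N.+1].
  rewrite map_inj_in_uniq ?iota_uniq // => a b _ _ e.
  have := congr1 (fun m : 'X_{1..s} => m j) e; rewrite /ma !mnmDE !Un_coord eqxx.
  by rewrite eq_sym (negbTE jk) !addn0.
have := uniq_leq_size un sub; rewrite size_map size_iota.
have := std_le_X (leqnn N) => h1 h2; have := leq_ltn_trans h1 h2; by rewrite ltnn.
Qed.

Section SPos.
Hypothesis spos : (0 < s)%N.
Let i0 : 'I_s := Ordinal spos.

Definition dom (m : 'X_{1..s}) : 'I_s := [arg max_(i > i0) m i].

Lemma dom_max (m : 'X_{1..s}) i : (m i <= m (dom m))%N.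
Proof. by rewrite /dom; case: arg_maxnP => // j _ H; apply: H. Qed.

Lemma mdeg_bound (m : 'X_{1..s}) j c : (forall k, k != j -> m k <= c)%N ->
  (mdeg m <= m j + s * c)%N.
Proof.
move=> H; rewrite mdegE (bigD1 j) //= leq_add2l -sum_const_ord.
rewrite [X in (_ <= X)%N](bigD1 j) //=; apply: leq_trans (leq_addl _ _).
by apply: leq_sum => k /H.
Qed.

Lemma pair_le (m : 'X_{1..s}) j k : j != k -> (N <= m j)%N -> (N <= m k)%N ->
  (U_(j) *+ N + U_(k) *+ N <= m)%MM.
Proof.
move=> jk hj hk; apply/mnm_lepP => i; rewrite mnmDE !Un_coord.
case: (eqVneq j i) => [<-|ji]; first by rewrite eq_sym (negbTE jk) addn0.
by case: eqP => [<-|]; rewrite add0n.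
Qed.

Lemma std_dom_facts d (m : 'X_{1..s}) : (s * N + N <= d)%N -> m \in std d.+1 ->
  (forall k, k != dom m -> m k < N)%N /\ (N < m (dom m))%N.
Proof.
move=> Hd; rewrite mem_std => /andP [/eqP md /inMbP nM].
have H1 : forall k, k != dom m -> (m k < N)%N.
  move=> k kj; rewrite ltnNge; apply/negP => hk; apply: nM.
  apply: M_mul (pair_in_M kj) _; rewrite eq_sym in kj.
  by rewrite addmC; apply: pair_le; rewrite // (leq_trans hk) // dom_max.
split=> //; have := mdeg_bound (j := dom m) (c := N) (m := m).
by rewrite md => /(_ (fun k kj => ltnW (H1 k kj))); lia.
Qed.

Lemma std_dec d : (s * N + N <= d)%N -> (size (std d.+1) <= size (std d))%N.
Proof.
move=> Hd; pose g m := (m - U_(dom m))%MM.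
have gK (m : 'X_{1..s}) : (0 < m (dom m))%N -> (g m + U_(dom m))%MM = m.
  by move=> h; rewrite submK //; apply/mnm_lepP => i; rewrite mnm1E; case: eqP => [<-|].
have sub : {subset [seq g m | m <- std d.+1] <= std d}.
  move=> m' /mapP [m ms ->]; have [_ hj] := std_dom_facts Hd ms.
  move: (ms); rewrite !mem_std => /andP [/eqP md /inMbP nM].
  apply/andP; split.
    by move: md; rewrite -{1}(gK m) ?mdegD ?mdeg1 ?addn1 => [[->]|]; rewrite // (leq_trans _ hj).
  apply/inMbP => Mg; apply: nM; apply: M_mul Mg _; exact: lem_subr.
have inj : {in std d.+1 &, injective g}.
  move=> m1 m2 m1s m2s e.
  have [_ h1] := std_dom_facts Hd m1s; have [_ h2] := std_dom_facts Hd m2s.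
  have c1 : (N <= g m1 (dom m1))%N by rewrite mnmBE mnm1E eqxx subn1 -ltnS prednK ?(leq_trans _ h1).
  have c2 : (N <= g m2 (dom m2))%N by rewrite mnmBE mnm1E eqxx subn1 -ltnS prednK ?(leq_trans _ h2).
  have e12 : dom m1 = dom m2.
    apply/eqP; apply: contraT => ne.
    have gs : g m1 \in std d by apply: sub; apply: map_f.
    move: gs; rewrite mem_std => /andP [_ /inMbP []].
    apply: M_mul (pair_in_M ne) _; apply: pair_le => //; by rewrite e.
  by rewrite -(gK m1) ?(leq_trans _ h1) // -(gK m2) ?(leq_trans _ h2) // e e12.
have un : uniq [seq g m | m <- std d.+1] by rewrite map_inj_in_uniq ?std_uniq.
by have := uniq_leq_size un sub; rewrite size_map.
Qed.

End SPos.

Lemma nat_evconst (a : nat -> nat) D :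
  (forall d, (D <= d)%N -> (a d.+1 <= a d)%N) ->
  exists D' c, forall d, (D' <= d)%N -> a d = c.
Proof.
move=> H.
have mono : forall d k, (D <= d)%N -> (a (d + k) <= a d)%N.
  move=> d k Dd; elim: k => [|k IH]; first by rewrite addn0.
  by rewrite addnS; apply: leq_trans IH; apply: H; apply: leq_trans Dd (leq_addr _ _).
have mono' : forall d e, (D <= d)%N -> (d <= e)%N -> (a e <= a d)%N.
  by move=> d e Dd de; rewrite -(subnKC de); apply: mono.
suff: forall v d, (D <= d)%N -> (a d <= v)%N -> exists D' c, forall e, (D' <= e)%N -> a e = c.
  by apply; last exact: leqnn.
elim=> [|v IH] d Dd adv.
  exists d, 0%N => e de; apply/eqP; rewrite -leqn0; apply: leq_trans adv.
  exact: mono'.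
case: (excluded_middle_informative (exists e, (d <= e)%N /\ (a e < a d)%N)).
  move=> [e [de lt]]; apply: (IH e); first exact: leq_trans de.
  by rewrite -ltnS; apply: leq_trans adv.
move=> nex; exists d, (a d) => e de; apply/eqP; rewrite eqn_leq mono' //=.
by rewrite leqNgt; apply/negP => lt; apply: nex; exists e.
Qed.

Section SPos2.
Hypothesis spos : (0 < s)%N.

Lemma std_evconst : exists D c, forall d, (D <= d)%N -> size (std d) = c.
Proof. by apply: (nat_evconst (D := s * N + N)) => d; apply: std_dec. Qed.

Hypothesis Vnz : (0 < size V)%N.

Lemma exj : exists j : 'I_s, forall e, ~ M 'X_[U_(j) *+ e].
Proof.
case: (excluded_middle_informative (exists j : 'I_s, forall e, ~ M 'X_[U_(j) *+ e])) => // nex.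
exfalso.
have Hall : forall j : 'I_s, exists e, M 'X_[U_(j) *+ e].
  move=> j; case: (excluded_middle_informative (exists e, M 'X_[U_(j) *+ e])) => // ne.
  by exfalso; apply: nex; exists j => e Me; apply: ne; exists e.
pose ej (j : 'I_s) := epsilon (inhabits 0%N) (fun e => M 'X_[U_(j) *+ e]).
have Hej j : M 'X_[U_(j) *+ ej j].
  by apply: (epsilon_spec (inhabits 0%N) (fun e => M 'X_[U_(j) *+ e])).
pose E' := (\sum_(j < s) ej j)%N.
have HE j : M 'X_[U_(j) *+ E'.+1].
  apply: M_mul (Hej j) _; apply/mnm_lepP => i; rewrite !Un_coord.
  case: (j == i) => //; rewrite /E' (bigD1 j) //=; apply: leq_trans (leq_addr _ _) _.
  exact: leqnSn.
pose d := (size X + df + s * E'.+1)%N.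
have Hsz : (0 < size (std d))%N by apply: leq_trans Vnz (V_le_std _); rewrite /d leq_addr.
pose m := nth 0%MM (std d) 0.
have ms : m \in std d by apply: mem_nth.
move: (ms); rewrite mem_std => /andP [/eqP md /inMbP nM]; apply: nM.
case: (excluded_middle_informative (exists j, (E'.+1 <= m j)%N)) => [[j hj]|nj].
  apply: M_mul (HE j) _; apply/mnm_lepP => i; rewrite Un_coord.
  by case: eqP => [<-|]. 
exfalso; have hb : (mdeg m <= s * E')%N.
  rewrite mdegE -sum_const_ord; apply: leq_sum => i _.
  by rewrite -ltnS ltnNge; apply/negP => h; apply: nj; exists i.
move: hb; rewrite md /d mulnS; lia.
Qed.

Lemma M_prime_lin (P : S -> Prop) : is_prime_ideal P -> (forall g, M g -> P g) ->
  exists j : 'I_s, forall k, k != j -> P 'X_k.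
Proof.
move=> HP MP.
case: (excluded_middle_informative (exists j : 'I_s, ~ P 'X_j)) => [[j nPj]|H].
  exists j => k kj.
  case: (excluded_middle_informative (P 'X_k)) => // nPk; exfalso.
  have := MP _ (pair_in_M kj); rewrite X_pow_pair.
  case: (HP) => _ [_ Pm] /Pm [] /(prime_exp HP) //.
exists (Ordinal spos) => k _.
case: (excluded_middle_informative (P 'X_k)) => // nPk; exfalso.
by apply: H; exists k.
Qed.

End SPos2.

End MonI.

Definition lin (x : 'I_s -> K) (j k : 'I_s) : S := 'X_k - (x k / x j) *: 'X_j.

Definition psi (j : 'I_s) (u : {poly K}) : S := (map_poly (mpolyC s (R := K)) u).['X_j].

Lemma psiD j : {morph psi j : a b / a + b}.
Proof. by move=> a b; rewrite /psi rmorphD hornerD. Qed.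

Lemma psiM j : {morph psi j : a b / a * b}.
Proof. by move=> a b; rewrite /psi rmorphM hornerM. Qed.

Lemma psiC j c : psi j c%:P = c%:MP.
Proof. by rewrite /psi map_polyC hornerC. Qed.

Lemma psi0 j : psi j 0 = 0.
Proof. by rewrite -[0]/(0%:P) psiC mpolyC0. Qed.

Lemma psi1 j : psi j 1 = 1.
Proof. by rewrite -[1]/(1%:P) psiC. Qed.

Lemma psiN j a : psi j (- a) = - psi j a.
Proof. by rewrite /psi rmorphN hornerN. Qed.

Lemma psiZX j c : psi j (c *: 'X) = c *: 'X_j.
Proof. by rewrite -mul_polyC psiM psiC /psi map_polyX hornerX mul_mpolyC. Qed.

Definition tau (x : 'I_s -> K) j (p : S) : S := psi j (phiv (fun k => x k / x j) p).

Lemma tauD x j : {morph tau x j : a b / a + b}.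
Proof. by move=> a b; rewrite /tau phivD psiD. Qed.

Lemma tauM x j : {morph tau x j : a b / a * b}.
Proof. by move=> a b; rewrite /tau phivM psiM. Qed.

Lemma tau_sum x j (T : Type) (r : seq T) (F : T -> S) :
  tau x j (\sum_(i <- r) F i) = \sum_(i <- r) tau x j (F i).
Proof.
elim: r => [|a r IH]; first by rewrite !big_nil /tau phiv0 psi0.
by rewrite !big_cons tauD IH.
Qed.

Lemma tau_prod x j (T : Type) (r : seq T) (F : T -> S) :
  tau x j (\prod_(i <- r) F i) = \prod_(i <- r) tau x j (F i).
Proof.
elim: r => [|a r IH]; first by rewrite !big_nil /tau phiv1 psi1.
by rewrite !big_cons tauM IH.
Qed.

Lemma tau_exp x j a n : tau x j (a ^+ n) = tau x j a ^+ n.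
Proof.
elim: n => [|n IH]; first by rewrite !expr0 /tau phiv1 psi1.
by rewrite !exprS tauM IH.
Qed.

Lemma tauZ x j c a : tau x j (c *: a) = c *: tau x j a.
Proof. by rewrite /tau phivZ -mul_polyC psiM psiC mul_mpolyC. Qed.

Lemma tauX x j k : tau x j 'X_k = (x k / x j) *: 'X_j.
Proof. by rewrite /tau phivX psiZX. Qed.

Lemma cong_mul P a a' b b' : is_ideal P -> P (a - a') -> P (b - b') ->
  P (a * b - a' * b').
Proof.
move=> HP Ha Hb.
have -> : a * b - a' * b' = a * (b - b') + (a - a') * b'.
  by rewrite mulrBr mulrBl addrA subrK.
case: (HP) => _ [PD PM]; apply: PD; first exact: PM.
exact: idealMr.
Qed.

Lemma cong_exp P a a' n : is_ideal P -> P (a - a') -> P (a ^+ n - a' ^+ n).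
Proof.
move=> HP H; elim: n => [|n IH]; first by rewrite !expr0 subrr; case: HP.
by rewrite !exprS; apply: cong_mul.
Qed.

Lemma cong_prod P (T : Type) (r : seq T) (F G : T -> S) : is_ideal P ->
  (forall i, P (F i - G i)) -> P (\prod_(i <- r) F i - \prod_(i <- r) G i).
Proof.
move=> HP H; elim: r => [|a r IH]; first by rewrite !big_nil subrr; case: HP.
by rewrite !big_cons; apply: cong_mul.
Qed.

Lemma cong_tau P x j : is_ideal P -> (forall k, P (lin x j k)) ->
  forall p, P (p - tau x j p).
Proof.
move=> HP Hl p; rewrite {1 2}(mpolyE p) tau_sum -sumrB; apply: ideal_sum => // m _.
rewrite tauZ -scalerBr; apply: idealZ => //.
rewrite {1 2}mpolyXE_id tau_prod; apply: cong_prod => // i.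
rewrite tau_exp; apply: cong_exp => //; rewrite tauX; exact: Hl.
Qed.

Lemma ex_min_size (Q : {poly K} -> Prop) u : Q u -> u != 0 ->
  exists r, [/\ Q r, r != 0 & forall r', Q r' -> r' != 0 -> (size r <= size r')%N].
Proof.
move=> Qu nz.
pose b n := if excluded_middle_informative (exists r, [/\ Q r, r != 0 & size r = n])
            then true else false.
have bP n : reflect (exists r, [/\ Q r, r != 0 & size r = n]) (b n).
  by rewrite /b; case: excluded_middle_informative => h; constructor.
have exb : exists n, b n by exists (size u); apply/bP; exists u.
case: (ex_minnP exb) => n /bP [r [Qr rnz <-]] Hmin.
exists r; split=> // r' Qr' nz'; apply: Hmin; apply/bP; by exists r'.
Qed.

Lemma poly_chain (Q1 Q2 : {poly K} -> Prop) u b :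
  (forall a, Q1 a -> Q2 a) ->
  (forall a c, Q1 c -> Q1 (a * c)) ->
  (forall a c, Q1 (a * c) -> Q1 a \/ Q1 c) ->
  (forall a c, Q2 a -> Q2 c -> Q2 (a + c)) ->
  (forall a c, Q2 c -> Q2 (a * c)) ->
  ~ Q2 1 ->
  Q1 u -> u != 0 -> Q2 b -> ~ Q1 b -> False.
Proof.
move=> Q12 Q1M Q1P Q2D Q2M nQ21 Q1u unz Q2b nQ1b.
have [r [Q2r rnz rmin]] := ex_min_size (Q12 _ Q1u) unz.
have Hdiv q : Q2 q -> q = q %/ r * r.
  move=> Q2q; have Hm : Q2 (q %% r).
    have -> : q %% r = q + (- (q %/ r)) * r.
      by apply/eqP; rewrite eq_sym mulNr subr_eq addrC -divp_eq.
    by apply: Q2D => //; apply: Q2M.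
  have : q %% r == 0.
    apply: contraT => nz; have := rmin _ Hm nz; rewrite leqNgt ltn_modp rnz //.
  by move/eqP => e; rewrite {1}(divp_eq q r) e addr0.
have r2 : (1 < size r)%N.
  rewrite ltnNge; apply/negP => hr.
  have : size r == 1%N by rewrite eqn_leq hr lt0n size_poly_eq0.
  case/size_poly1P => c cnz re; apply: nQ21.
  have -> : (1 : {poly K}) = (c^-1)%:P * r by rewrite re -polyCM mulVf.
  exact: Q2M.
have [p [Q1p pnz pmin]] := ex_min_size Q1u unz.
have pe := Hdiv _ (Q12 _ Q1p).
case: (Q1P (p %/ r) r); first by rewrite -pe.
- move=> Q1w; have wnz : p %/ r != 0 by apply: contraNneq pnz => w0; rewrite pe w0 mul0r.
  have := pmin _ Q1w wnz; rewrite {1}pe size_mul //; move: r2.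
  set a1 := size (p %/ r); set c1 := size r; move=> h1 h2.
  have : (a1 + c1).-1 = (a1 + c1.-1)%N by case: (c1) h1 => // c1' _; rewrite addnS.
  lia.
- move=> Q1r; apply: nQ1b; rewrite (Hdiv _ Q2b); exact: Q1M.
Qed.

Lemma chain_contra (P0 P1 P2 : S -> Prop) x j :
  x j != 0 -> is_prime_ideal P0 -> is_prime_ideal P1 -> is_prime_ideal P2 ->
  strict_incl P0 P1 -> strict_incl P1 P2 -> (forall k, P0 (lin x j k)) -> False.
Proof.
move=> xj [HP0 _] [HP1 [nP11 PP1]] [HP2 [nP21 _]] [P01 [a [P1a nP0a]]] [P12 [a' [P2a' nP1a']]] Hl.
have cg := cong_tau HP0 Hl.
pose sg := phiv (fun k => x k / x j).
have key0 p : P1 p -> P1 (psi j (sg p)).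
  move=> H; have := P01 _ (cg p); rewrite /tau -/sg => H'.
  have -> : psi j (sg p) = p - (p - psi j (sg p)) by rewrite opprB addrC subrK.
  exact: idealB.
have key1 p : P2 p -> P2 (psi j (sg p)).
  move=> H; have := P12 _ (P01 _ (cg p)); rewrite /tau -/sg => H'.
  have -> : psi j (sg p) = p - (p - psi j (sg p)) by rewrite opprB addrC subrK.
  exact: idealB.
apply: (poly_chain (Q1 := fun u => P1 (psi j u)) (Q2 := fun u => P2 (psi j u))
          (u := sg a) (b := sg a')).
- by move=> c /P12.
- by move=> c d Hd; rewrite psiM; case: HP1 => _ [_ PM]; apply: PM.
- by move=> c d; rewrite psiM => /PP1.
- by move=> c d Hc Hd; rewrite psiD; case: HP2 => _ [PD _]; apply: PD.
- by move=> c d Hd; rewrite psiM; case: HP2 => _ [_ PM]; apply: PM.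
- by rewrite psi1.
- exact: key0.
- apply/eqP => e; apply: nP0a.
  have := cg a; rewrite /tau -/sg e psi0 subr0 //.
- exact: key1.
- move=> H; apply: nP1a'.
  have := P01 _ (cg a'); rewrite /tau -/sg => H'.
  have -> : a' = (a' - psi j (sg a')) + psi j (sg a') by rewrite subrK.
  by case: HP1 => _ [PD _]; apply: PD.
Qed.

Lemma krull1 (J : S -> Prop) (x : 'I_s -> K) j :
  x j != 0 -> (forall g, J g -> Ix x g) ->
  (forall P, is_prime_ideal P -> (forall g, J g -> P g) ->
     exists (y : 'I_s -> K) j', y j' != 0 /\ forall k, P (lin y j' k)) ->
  krull_dim J = 1%N.
Proof.
move=> xj JI Hp; apply: krull_eq; split.
- exists [:: Ix x; Mx x]; split=> //; split.
  + case=> [|[|i]] //= _; first by split=> //; apply: Ix_prime.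
    split; first exact: Mx_prime.
    by move=> a /JI; rewrite /Mx /Ix => ->; rewrite horner0.
  + case=> //= _; split.
      by move=> a; rewrite /Mx /Ix => ->; rewrite horner0.
    exists 'X_j; rewrite /Mx /Ix phivX hornerZ hornerX mulr0; split=> //.
    apply/eqP; rewrite scaler_eq0 (negbTE xj) /= -size_poly_eq0 size_polyX //.
- move=> Ps [HPs HPs']; rewrite leqNgt; apply/negP => lt.
  have l0 : (0 < size Ps)%N by lia.
  have l1 : (1 < size Ps)%N by lia.
  have [P0p P0J] := HPs 0%N l0.
  have [y [j' [yj Hl]]] := Hp _ P0p P0J.
  exact: (chain_contra yj P0p (HPs 1%N l1).1 (HPs 2%N lt).1 (HPs' 0%N l1) (HPs' 1%N lt) Hl).
Qed.

Lemma prod_homog_in (T : eqType) (r : seq T) (F : T -> S) :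
  (forall i, i \in r -> F i \is 1.-homog) -> \prod_(i <- r) F i \is (size r).-homog.
Proof.
elim: r => [|a r IH] H; first by rewrite big_nil; apply: dhomog1.
rewrite big_cons; apply: (dhomogM (H a _) (IH _)); first by rewrite inE eqxx.
by move=> i ir; apply: H; rewrite inE ir orbT.
Qed.

Lemma lin_homog (x : 'I_s -> K) j k : lin x j k \is 1.-homog.
Proof. by apply: rpredB; [exact: homogX1| apply: rpredZ; exact: homogX1]. Qed.

Lemma lin_eval (x : 'I_s -> K) j k : x j != 0 -> (lin x j k).@[x] = 0.
Proof. by move=> xj; rewrite mevalB mevalZ !mevalXU mulfVK // subrr. Qed.

Section Final.
Variable (X : seq (point K s)).
Hypothesis HX : proj_finite_set X.
Local Notation I := (vanishing_ideal X).

Lemma prime_over_I (P : S -> Prop) : is_prime_ideal P -> (forall g, I g -> P g) ->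
  exists (y : 'I_s -> K) j, y j != 0 /\ forall k, P (lin y j k).
Proof.
move=> HP IP.
case: (excluded_middle_informative
  (exists (y : 'I_s -> K) j, y j != 0 /\ forall k, P (lin y j k))) => // nex.
exfalso.
pose Pr (x : point K s) (l : S) := [/\ l \is 1.-homog, l.@[x] = 0 & ~ P l].
have ex x : x \in X -> exists l, Pr x l.
  move=> xX; have [j xj] := X_nz HX xX.
  case: (excluded_middle_informative (exists k, ~ P (lin x j k))).
    by move=> [k nk]; exists (lin x j k); split=> //; [exact: lin_homog | exact: lin_eval].
  move=> nk; exfalso; apply: nex; exists x, j; split=> // k.
  by case: (excluded_middle_informative (P (lin x j k))) => // h; exfalso; apply: nk; exists k.
pose lf x := epsilon (inhabits 0) (Pr x).
have Hlf x : x \in X -> Pr x (lf x).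
  by move=> xX; apply: (epsilon_spec (inhabits 0) (Pr x)); apply: ex.
have Iq : I (\prod_(x <- X) lf x).
  apply: (van_gen (d := size X)).
    by apply: prod_homog_in => x /Hlf [].
  move=> x xX; rewrite rmorph_prod /= (big_rem x xX) /=.
  by case: (Hlf x xX) => _ -> _; rewrite mul0r.
have [x xX Px] := prime_prod HP (IP _ Iq).
by case: (Hlf x xX) => _ _.
Qed.

Lemma I_sub_Ix x : x \in X -> forall g, I g -> Ix x g.
Proof. by move=> xX g /van_char; apply. Qed.

Lemma krull_I : X != [::] -> krull_dim I = 1%N.
Proof.
move=> Xnz; pose x := nth [ffun=> 0] X 0.
have xX : x \in X by apply: mem_nth; rewrite lt0n size_eq0.
have [j xj] := X_nz HX xX.
apply: (krull1 xj); first exact: (I_sub_Ix xX).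
exact: prime_over_I.
Qed.

Variable (f : S) (df : nat).
Hypothesis Hf : f \is df.-homog.
Local Notation J := (ideal_add I f).
Local Notation V := (filter (fun x : point K s => f.@[x] == 0) X).

Lemma krull_J : (0 < size V)%N -> krull_dim J = 1%N.
Proof.
move=> Vnz; pose x := nth [ffun=> 0] V 0.
have xV : x \in V by apply: mem_nth.
have xX : x \in X by move: xV; rewrite mem_filter => /andP [].
have fx : f.@[x] = 0 by move: xV; rewrite mem_filter => /andP [/eqP].
have [j xj] := X_nz HX xX.
apply: (krull1 xj).
  apply: gen_ideal_min; first exact: (Ix_prime x).1.
  move=> g [Ig|->]; first exact: I_sub_Ix.
  exact/(phiv_homog0 x Hf).
move=> P HP JP; apply: prime_over_I => // g Ig; apply: JP; exact: I_sub_J.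
Qed.

Lemma colon_triv : size V = 0%N ->
  forall h, colon I f h <-> I h.
Proof.
move=> V0 h; rewrite /colon; split; last by move=> Ih; apply: idealMr => //; apply: van_ideal.
move/van_char => H; apply/van_char => x xX; have := H x xX; rewrite phivM => /eqP.
rewrite mulf_eq0 => /orP [/eqP //|/eqP /(phiv_homog0 x Hf) fx].
have : x \in V by rewrite mem_filter fx eqxx.
by rewrite (size0nil V0).
Qed.

Variable (o : monomial_order s).
Hypothesis fnz : f != 0.
Local Notation M := (ideal_add (in_ideal o I) (in_poly o f)).

Lemma krull_M : (0 < s)%N -> (0 < size V)%N -> krull_dim M = 1%N.
Proof.
move=> spos Vnz.
have [j Hj] := exj HX o Hf fnz spos Vnz.
pose e (j : 'I_s) : 'I_s -> K := fun k => (k == j)%:R.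
have ej j' : e j' j' != 0 by rewrite /e eqxx oner_eq0.
have monoIx b : M 'X_[b] -> Ix (e j) 'X_[b].
  move=> Mb; apply/(phiv_homog0 (e j) (d := mdeg b)); first by rewrite dhomogX.
  rewrite mevalX.
  case: (excluded_middle_informative (exists i, i != j /\ b i != 0%N)).
    move=> [i [ij bi]]; rewrite (bigD1 i) //= /e (negbTE ij) expr0n (negbTE bi) mul0r //.
  move=> H; exfalso; apply: (Hj (b j)).
  have -> : (U_(j) *+ b j)%MM = b; last exact: Mb.
  apply/mnmP => i; rewrite Un_coord; case: eqP => [<-//|/eqP ji].
  case: (excluded_middle_informative (b i = 0%N)) => // bi.
  by exfalso; apply: H; exists i; split; [rewrite eq_sym|apply/eqP].
apply: (krull1 (ej j)).
  apply: gen_ideal_min; first exact: (Ix_prime (e j)).1.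
  move=> g [Ig|->]; last by apply: monoIx; apply: gen_ideal_gen; right.
  move: g Ig; apply: gen_ideal_min; first exact: (Ix_prime (e j)).1.
  by move=> g [g' [Ig' [nz ->]]]; apply: monoIx; apply: (lead_in_M o f).
move=> P HP MP; have [j0 Hj0] := M_prime_lin HX spos HP MP.
exists (e j0), j0; split=> // k; rewrite /lin.
case: (eqVneq k j0) => [->|kj].
  by rewrite divff // scale1r subrr; case: HP => [[]].
by rewrite /e (negbTE kj) mul0r scale0r subr0; apply: Hj0.
Qed.

End Final.
End Main.

Unset Implicit Arguments.
Set Strict Implicit.

Theorem corollary4p3 (K : fieldType) (s : nat) (X : seq (@point K s))
    (o : monomial_order s) (f : {mpoly K[s]}) :
  proj_finite_set X ->
  f != 0 -> homogeneous f ->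
  ~ (forall h, colon (vanishing_ideal X) f h <-> vanishing_ideal X h) ->
  [/\ (card_zeros X f)%:R = deg (ideal_add (vanishing_ideal X) f),
      deg (ideal_add (vanishing_ideal X) f)
        <= deg (ideal_add (in_ideal o (vanishing_ideal X)) (in_poly o f)),
      deg (ideal_add (in_ideal o (vanishing_ideal X)) (in_poly o f))
        <= deg (vanishing_ideal X)
    & ~ vanishing_ideal X f ->
      deg (ideal_add (vanishing_ideal X) f) < deg (vanishing_ideal X)].
Proof.
move=> HX fnz [df Hf] NC.
pose V := filter (fun x : point K s => f.@[x] == 0) X.
have cz : card_zeros X f = size V by rewrite /card_zeros size_filter.
have Vnz : (0 < size V)%N.
  rewrite lt0n; apply/negP => /eqP V0; apply: NC; exact: (colon_triv Hf V0).
have xV : nth [ffun=> 0] V 0 \in V := mem_nth _ Vnz.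
have xX : nth [ffun=> 0] V 0 \in X by move: xV; rewrite mem_filter => /andP [].
have spos : (0 < s)%N by have [j _] := X_nz HX xX; exact: (leq_ltn_trans (leq0n j) (ltn_ord j)).
have Xnz : X != [::] by apply/negP => /eqP X0; rewrite X0 in xX.
have dJ : deg (ideal_add (vanishing_ideal X) f) = (size V)%:R.
  apply: deg_one; first exact: (krull_J HX Hf Vnz).
  by exists (size X + df)%N => d Hd; apply: (H_J HX Hf Hd).
have dI : deg (vanishing_ideal X) = (size X)%:R.
  apply: deg_one; first exact: (krull_I HX Xnz).
  by exists (size X) => d Hd; apply: (H_I HX Hd).
have [D [c Hc]] := std_evconst HX o Hf fnz spos.
have dM : deg (ideal_add (in_ideal o (vanishing_ideal X)) (in_poly o f)) = c%:R.
  apply: deg_one; first exact: (krull_M HX Hf o fnz spos Vnz).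
  by exists D => d Hd; rewrite H_M Hc.
have cV : (size V <= c)%N.
  rewrite -(Hc (maxn D (size X + df))) ?leq_maxl //.
  by apply: (V_le_std HX o Hf fnz); rewrite leq_maxr.
have cX : (c <= size X)%N.
  rewrite -(Hc (maxn D (size X))) ?leq_maxl //.
  by apply: (std_le_X HX o f); rewrite leq_maxr.
rewrite dJ dI dM cz; split; rewrite ?ler_nat //.
move=> nI; rewrite ltr_nat ltn_neqAle; apply/andP; split; last first.
  by rewrite /V size_filter count_size.
apply/negP => /eqP e; apply: nI; apply: (van_gen (d := df) Hf) => x xX'.
have : all (fun x : point K s => f.@[x] == 0) X by rewrite all_count -size_filter e.
by move/allP => /(_ x xX') /eqP.
Qed.
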